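(* Let $\mathfrak g=\mathfrak k\oplus\mathfrak m$ be a Pauli-spanned Cartan decomposition, and let $b_1\neq b_2$ be two commuting Pauli strings in $\tilde{\mathfrak m}$ lying in the same connected component of the frustration graph of $\mathfrak g$. Then $|\tilde{\mathfrak k}^1|=|\tilde{\mathfrak k}^2|$.
   Context: Pauli strings on $n$ qubits are tensor products of $I,X,Y,Z$, not all identity; two Pauli strings either commute or anticommute. A Pauli-spanned Cartan decomposition is $\mathfrak g=\mathfrak k\oplus\mathfrak m\subseteq\mathfrak{su}(2^n)$ with $\mathfrak k=\mathrm{span}_{i\mathbb R}\tilde{\mathfrak k}$, $\mathfrak m=\mathrm{span}_{i\mathbb R}\tilde{\mathfrak m}$, $\mathfrak g=\mathrm{span}_{i\mathbb R}\tilde{\mathfrak g}$ with $\tilde{\mathfrak g}=\tilde{\mathfrak k}\sqcup\tilde{\mathfrak m}$ the set of all Pauli strings (up to phase) $\sigma$ with $i\sigma\in\mathfrak g$, and $[\mathfrak k,\mathfrak k]\subseteq\mathfrak k$, $[\mathfrak m,\mathfrak m]\subseteq\mathfrak k$, $[\mathfrak k,\mathfrak m]\subseteq\mathfrak m$. The frustration graph of $\mathfrak g$ has vertex set $\tilde{\mathfrak g}$, with edges between anticommuting pairs. For Pauli strings $b_1,b_2,\dots$ and disjoint index lists, $\tilde{\mathfrak k}^{i_1i_2\dots}_{j_1j_2\dots}$ is the set of $k\in\tilde{\mathfrak k}$ anticommuting with every $b_{i_p}$ and commuting with every $b_{j_q}$ (no condition on other indices); in particular $\tilde{\mathfrak k}^i$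 is the set of elements of $\tilde{\mathfrak k}$ anticommuting with $b_i$. *)

(* Defs.v *)
From mathcomp Require Import all_boot.
Set Implicit Arguments. Unset Strict Implicit. Unset Printing Implicit Defensive.

(* Pauli strings on n qubits, up to phase, in the symplectic (x,z) encoding:
   each qubit carries a pair (x,z) : bool * bool with
   I = (false,false), X = (true,false), Z = (false,true), Y = (true,true). *)
Definition pstring (n : nat) := {ffun 'I_n -> bool * bool}.

Definition pid (n : nat) : pstring n := [ffun _ => (false, false)].

(* single-qubit Paulis anticommute iff both non-identity and different *)
Definition anticomm1 (a b : bool * bool) : bool := (a.1 && b.2) (+) (a.2 && b.1).

Definition anticommute n (p q : pstring n) : bool :=
  odd #|[set i | anticomm1 (p i) (q i)]|.

Definition pmul n (p q : pstring n) : pstring n :=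
  [ffun i => ((p i).1 (+) (q i).1, (p i).2 (+) (q i).2)].

(* Pauli-spanned Cartan decomposition g = k (+) m, given by the sets
   Ktil, Mtil of Pauli strings spanning k and m.  Since Pauli strings are
   linearly independent and [i s, i t] = 0 if s,t commute and is a nonzero
   multiple of i (s t) (a Pauli string up to phase) if they anticommute,
   the span inclusions [k,k] <= k, [m,m] <= k, [k,m] <= m are equivalent to
   the closure conditions below. *)
Definition pauli_cartan n (Ktil Mtil : {set pstring n}) : Prop :=
  [/\ pid n \notin Ktil, pid n \notin Mtil & [disjoint Ktil & Mtil]] /\
  [/\ {in Ktil &, forall a b, anticommute a b -> pmul a b \in Ktil},
      {in Mtil &, forall a b, anticommute a b -> pmul a b \in Ktil} &
      {in Ktil & Mtil, forall a b, anticommute a b -> pmul a b \in Mtil}].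

Definition frustration n (Ktil Mtil : {set pstring n}) : rel (pstring n) :=
  fun a b => [&& a \in Ktil :|: Mtil, b \in Ktil :|: Mtil & anticommute a b].

Definition ksup n (Ktil : {set pstring n}) (b : pstring n) : {set pstring n} :=
  [set k in Ktil | anticommute k b].

(* Main.v *)
Require Import Defs.
From mathcomp Require Import all_boot.
Set Implicit Arguments. Unset Strict Implicit. Unset Printing Implicit Defensive.

Lemma ac_sum n (p q : pstring n) :
  anticommute p q = \big[addb/false]_i anticomm1 (p i) (q i).
Proof.
rewrite /anticommute -sum1_card big_mkcond /=.
apply: (big_rec2 (fun n b => odd n = b)) => //= i m b _ <-.
by rewrite inE oddD; case: (anticomm1 _ _).
Qed.

Lemma acC n (p q : pstring n) : anticommute p q = anticommute q p.
Proof.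
rewrite !ac_sum; apply: eq_bigr => i _.
by case: (p i) (q i) => [[] []] [[] []].
Qed.

Lemma acxx n (p : pstring n) : anticommute p p = false.
Proof.
rewrite ac_sum big1 // => i _; by case: (p i) => [[] []].
Qed.

Lemma acMl n (p q r : pstring n) :
  anticommute (pmul p q) r = anticommute p r (+) anticommute q r.
Proof.
rewrite !ac_sum -big_split /=; apply: eq_bigr => i _.
rewrite ffunE.
by case: (p i) (q i) (r i) => [[] []] [[] []] [[] []].
Qed.

Lemma acMr n (p q r : pstring n) :
  anticommute r (pmul p q) = anticommute r p (+) anticommute r q.
Proof. by rewrite acC acMl !(acC r). Qed.

Lemma pmulC n (p q : pstring n) : pmul p q = pmul q p.
Proof. apply/ffunP => i; rewrite !ffunE; by case: (p i) (q i) => [[] []] [[] []]. Qed.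

Lemma pmulK n (p q : pstring n) : pmul p (pmul p q) = q.
Proof. apply/ffunP => i; rewrite !ffunE; by case: (p i) (q i) => [[] []] [[] []]. Qed.

Section Main.
Variables (n : nat) (K M : {set pstring n}).
Hypothesis HC : pauli_cartan K M.
Let G := K :|: M.

Lemma closG : {in G &, forall a b, anticommute a b -> pmul a b \in G}.
Proof.
case: HC => _ [hKK hMM hKM] a b; rewrite /G !inE.
case/orP => ha; case/orP => hb hab.
- by rewrite hKK.
- by rewrite hKM ?orbT.
- by rewrite pmulC hKM ?orbT // acC.
- by rewrite hMM.
Qed.

Definition phi (a x : pstring n) := if anticommute a x then pmul a x else x.

Lemma phiK a : involutive (phi a).
Proof.
move=> x; rewrite {2}/phi; case: (boolP (anticommute a x)) => h.
  by rewrite /phi acC acMl acxx /= acC h pmulK.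
by rewrite /phi (negbTE h).
Qed.

Lemma phi_ac a x y : anticommute (phi a x) (phi a y) = anticommute x y.
Proof.
rewrite /phi; case: ifP => hx; case: ifP => hy;
  rewrite ?acMl ?acMr ?acxx ?(acC y a) ?(acC x a) ?(acC y x) ?hx ?hy //=;
  by case: (anticommute x y).
Qed.

Definition deg (c : pstring n) := #|[set x in G | anticommute x c]|.

Lemma phiG a x : a \in G -> x \in G -> phi a x \in G.
Proof. by move=> ha hx; rewrite /phi; case: ifP => // h; apply: closG. Qed.

Lemma deg_phi a c : a \in G -> deg (phi a c) = deg c.
Proof.
move=> ha; rewrite /deg.
have inj : injective (phi a) by apply: can_inj (phiK a).
rewrite -[RHS](card_imset _ inj); apply: eq_card => y; rewrite [in LHS]inE.
apply/andP/imsetP.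
- case=> hy hyc; exists (phi a y); last by rewrite phiK.
  by rewrite inE phiG //=; have := phi_ac a y (phi a c); rewrite phiK => ->.
- case=> x; rewrite inE => /andP [hx hxc] ->; split; first by apply: phiG.
  by rewrite phi_ac.
Qed.

Lemma deg_adj c d : c \in G -> d \in G -> anticommute c d -> deg c = deg d.
Proof.
move=> hc hd hcd; have hG := closG hc hd hcd.
rewrite -(deg_phi c hG); congr deg.
rewrite /phi acMl acxx /= acC hcd.
by rewrite pmulC pmulK.
Qed.

Lemma deg_M b : b \in M -> deg b = (#|ksup K b|).*2.
Proof.
move=> hb; case: HC => [[_ _ hdis] [_ hMM hKM]].
rewrite /deg /G.
have -> : [set x in K :|: M | anticommute x b] = ksup K b :|: [set x in M | anticommute x b].
  by apply/setP => x; rewrite !inE andb_orl.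
rewrite cardsU.
have -> : ksup K b :&: [set x in M | anticommute x b] = set0.
  apply/setP => x; rewrite !inE; apply/negP => /andP [/andP [hk _] /andP [hm _]].
  by move/disjointFr: hdis => /(_ x hk); rewrite hm.
rewrite cards0 subn0 -addnn; congr (_ + _).
have inj : injective (pmul b) by apply: can_inj (pmulK b).
rewrite -[RHS](card_imset _ inj); apply: eq_card => y; rewrite [in LHS]inE.
apply/andP/imsetP.
- case=> hy hyb; exists (pmul b y); last by rewrite pmulK.
  rewrite !inE hMM //; first by rewrite acMl acxx. by rewrite acC.
- case=> x; rewrite inE => /andP [hx hxb] ->; split.
    by rewrite pmulC hKM.
  by rewrite acMl acxx.
Qed.

End Main.

Theorem corollaryC2 (n : nat) (Ktil Mtil : {set pstring n}) (b1 b2 : pstring n) :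
  pauli_cartan Ktil Mtil ->
  b1 \in Mtil -> b2 \in Mtil -> b1 != b2 ->
  ~~ anticommute b1 b2 ->
  connect (frustration Ktil Mtil) b1 b2 ->
  #|ksup Ktil b1| = #|ksup Ktil b2|.
Proof.
move=> HC h1 h2 _ _ hcon.
apply: double_inj; rewrite -(deg_M HC h1) -(deg_M HC h2).
have cl : closed (frustration Ktil Mtil) [pred x | deg Ktil Mtil x == deg Ktil Mtil b1].
  move=> x y /and3P [hx hy hxy] /=.
  by rewrite !inE (deg_adj HC hx hy hxy).
have := closed_connect cl hcon; rewrite !inE eqxx => /esym/eqP.
by [].
Qed.
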